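(* The forgetful morphism $\imath:\mathcal{Q}(r,n)\to\mathcal{A}(r,n)$ is universally injective. That is, for any field $K\supseteq\mathbb{C}$ and any $K$-point $\alpha_K$ of $\mathcal{A}(r,n)$, there is at most one $K$-point $\varrho_K$ of $\mathcal{Q}(r,n)$ with $\imath(\varrho_K)=\alpha_K$.
   Context: Fix $V_\infty=\mathbb{C}^r$ with basis $e_a$ and $A_re_a=e_{a+1}$, $e_{r+1}=0$. $\mathcal{Q}(r,n)$ is the fine moduli space of framed cyclic representations $(V,B_1,B_2,B_3,I,J)$ up to $GL(V)$. These have $\dim V=n$ and satisfy $[B_1,B_2]+IJ=0$, $JB_3=A_rJ$, $B_3I=IA_r$ and $[B_3,B_i]=0$ for $i=1,2$; moreover no proper nonzero $B_1,B_2,B_3$-invariant subspace contains $\mathrm{Im}\,I$. $\mathcal{A}(r,n)$ is the fine moduli space of stable ADHM data $(V,B_1,B_2,I,J)$ with $[B_1,B_2]+IJ=0$ and no proper $B_1,B_2$-invariant subspace containing $\mathrm{Im}\,I$. The map $\imath$ forgets $B_3$. *)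

(* Defs.v *)
From HB Require Import structures.
From mathcomp Require Import all_boot all_algebra.
From mathcomp Require Import Rstruct complex.
Set Implicit Arguments. Unset Strict Implicit. Unset Printing Implicit Defensive.
Import GRing.Theory.
Local Open Scope ring_scope.

Definition CC : fieldType := Rdefinitions.R[i].

Section Defs.
Variables (K : fieldType) (r n : nat).

(* Convention: V = K^n, V_oo = K^r as COLUMN vectors; a linear map
   U -> W is a matrix 'M_(dim W, dim U) acting by left multiplication. *)

(* A_r e_a = e_(a+1), e_(r+1) = 0 : column a has a 1 in row a+1. *)
Definition Ar : 'M[K]_r := \matrix_(i < r, j < r) ((i : nat) == j.+1)%:R.

(* Subspaces W of K^n are encoded by a matrix S : 'M_n through
   W = { v | v^T lies in the row space of S }.  Then
   W is B-invariant   <=> (S *m B^T <= S)%MS,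
   Im I is in W        <=> (I^T <= S)%MS,
   W proper            <=> \rank S < n,
   W nonzero           <=> 0 < \rank S. *)
Definition invariant (S : 'M[K]_n) (B : 'M[K]_n) : bool := (S *m B^T <= S)%MS.
Definition contains_imI (S : 'M[K]_n) (I : 'M[K]_(n, r)) : bool := (I^T <= S)%MS.

Record adhm_data := ADHM {
  aB1 : 'M[K]_n; aB2 : 'M[K]_n; aI : 'M[K]_(n, r); aJ : 'M[K]_(r, n) }.

Record cyclic_data := Cyc {
  cB1 : 'M[K]_n; cB2 : 'M[K]_n; cB3 : 'M[K]_n;
  cI : 'M[K]_(n, r); cJ : 'M[K]_(r, n) }.

Definition stable_adhm (a : adhm_data) : Prop :=
  aB1 a *m aB2 a - aB2 a *m aB1 a + aI a *m aJ a = 0 /\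
  forall S : 'M[K]_n,
    invariant S (aB1 a) -> invariant S (aB2 a) -> contains_imI S (aI a) ->
    ~ (\rank S < n)%N.

Definition cyclic_rep (c : cyclic_data) : Prop :=
  [/\ cB1 c *m cB2 c - cB2 c *m cB1 c + cI c *m cJ c = 0,
      cJ c *m cB3 c = Ar *m cJ c,
      cB3 c *m cI c = cI c *m Ar,
      cB3 c *m cB1 c = cB1 c *m cB3 c /\ cB3 c *m cB2 c = cB2 c *m cB3 c &
      (forall S : 'M[K]_n,
        invariant S (cB1 c) -> invariant S (cB2 c) -> invariant S (cB3 c) ->
        contains_imI S (cI c) ->
        ~ ((0 < \rank S)%N /\ (\rank S < n)%N))].

Definition forget (c : cyclic_data) : adhm_data :=
  ADHM (cB1 c) (cB2 c) (cI c) (cJ c).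

(* Isomorphism under GL(V) = GL_n(K): g.(B,I,J) = (g B g^-1, g I, J g^-1). *)
Definition adhm_iso (a a' : adhm_data) : Prop :=
  exists2 g : 'M[K]_n, g \in unitmx &
    [/\ g *m aB1 a = aB1 a' *m g, g *m aB2 a = aB2 a' *m g,
        g *m aI a = aI a' & aJ a = aJ a' *m g].

Definition cyclic_iso (c c' : cyclic_data) : Prop :=
  exists2 g : 'M[K]_n, g \in unitmx &
    [/\ g *m cB1 c = cB1 c' *m g, g *m cB2 c = cB2 c' *m g,
        g *m cB3 c = cB3 c' *m g,
        g *m cI c = cI c' & cJ c = cJ c' *m g].

End Defs.

(* Main.v *)
Require Import Defs.
From HB Require Import structures.
From mathcomp Require Import all_boot all_algebra.
From mathcomp Require Import Rstruct complex.
Set Implicit Arguments. Unset Strict Implicit. Unset Printing Implicit Defensive.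
Import GRing.Theory.
Local Open Scope ring_scope.

Lemma inv_ker (K : fieldType) n (D B : 'M[K]_n) :
  D *m B = B *m D -> Defs.invariant (kermx D^T) B.
Proof.
move=> DB; rewrite /Defs.invariant sub_kermx -mulmxA -trmx_mul DB trmx_mul.
by rewrite mulmxA mulmx_ker mul0mx.
Qed.

Lemma key (K : fieldType) r n (a : adhm_data K r n) (T T' : 'M[K]_n) :
  stable_adhm a ->
  T *m aB1 a = aB1 a *m T -> T *m aB2 a = aB2 a *m T ->
  T' *m aB1 a = aB1 a *m T' -> T' *m aB2 a = aB2 a *m T' ->
  T *m aI a = aI a *m Ar K r -> T' *m aI a = aI a *m Ar K r -> T = T'.
Proof.
move=> [_ st] h1 h2 h1' h2' hI hI'.
set D := T - T'.
have d1 : D *m aB1 a = aB1 a *m D by rewrite mulmxBl mulmxBr h1 h1'.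
have d2 : D *m aB2 a = aB2 a *m D by rewrite mulmxBl mulmxBr h2 h2'.
have dI : D *m aI a = 0 by rewrite mulmxBl hI hI' subrr.
have := st (kermx D^T) (inv_ker d1) (inv_ker d2).
rewrite /contains_imI sub_kermx -trmx_mul dI trmx0 eqxx => /(_ isT).
rewrite mxrank_ker => H.
have : (\rank D^T == 0)%N.
  case: eqP => // /eqP Hn; exfalso; apply: H; rewrite ltn_subrL.
  have p : (0 < \rank D^T)%N by rewrite lt0n.
  by rewrite p /=; apply: leq_trans p (rank_leq_row _).
rewrite mxrank_eq0 trmx_eq0 subr_eq0 => /eqP //.
Qed.

Lemma conjL (K : fieldType) n m (g g' : 'M[K]_n) (X X' : 'M[K]_(n, m)) Y :
  g' \in unitmx -> g *m X = Y -> g' *m X' = Y ->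
  (invmx g' *m g) *m X = X'.
Proof. by move=> u' <- h; rewrite -mulmxA -h mulKmx. Qed.

Lemma conjM (K : fieldType) n (g g' X X' Y : 'M[K]_n) :
  g' \in unitmx -> g *m X = Y *m g -> g' *m X' = Y *m g' ->
  (invmx g' *m g) *m X = X' *m (invmx g' *m g).
Proof.
move=> u' hg hg'.
have eY : Y = g' *m X' *m invmx g' by rewrite hg' mulmxK.
by rewrite -mulmxA hg eY !mulmxA mulVmx // mul1mx.
Qed.

Lemma transport (K : fieldType) r n (c : cyclic_data K r n) (a : adhm_data K r n)
  (g : 'M[K]_n) : cyclic_rep c -> g \in unitmx ->
  g *m cB1 c = aB1 a *m g -> g *m cB2 c = aB2 a *m g -> g *m cI c = aI a ->
  let T := g *m cB3 c *m invmx g in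
  [/\ T *m aB1 a = aB1 a *m T, T *m aB2 a = aB2 a *m T,
      T *m aI a = aI a *m Ar K r & g *m cB3 c = T *m g].
Proof.
move=> [_ _ h3I [c1 c2] _] u g1 g2 gI T.
have e1 : aB1 a = g *m cB1 c *m invmx g by rewrite g1 mulmxK.
have e2 : aB2 a = g *m cB2 c *m invmx g by rewrite g2 mulmxK.
split; rewrite /T.
- rewrite e1 !mulmxA (mulmxKV u) -(mulmxA g (cB3 c)) c1 mulmxA.
  by rewrite -!(mulmxA _ (invmx g) g) mulVmx // !mulmx1.
- rewrite e2 !mulmxA (mulmxKV u) -(mulmxA g (cB3 c)) c2 mulmxA.
  by rewrite -!(mulmxA _ (invmx g) g) mulVmx // !mulmx1.
- by rewrite -gI !mulmxA (mulmxKV u) -!mulmxA h3I.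
- by rewrite (mulmxKV u).
Qed.

Theorem lemma3p5 (K : fieldType) (emb : {rmorphism CC -> K}) (r n : nat)
  (alpha : adhm_data K r n) (rho rho' : cyclic_data K r n) :
  stable_adhm alpha ->
  cyclic_rep rho -> cyclic_rep rho' ->
  adhm_iso (forget rho) alpha -> adhm_iso (forget rho') alpha ->
  cyclic_iso rho rho'.
Proof.
move=> st cr cr' [g u [g1 g2 gI gJ]] [g' u' [g1' g2' gI' gJ']].
have [t1 t2 tI t3] := transport cr u g1 g2 gI.
have [t1' t2' tI' t3'] := transport cr' u' g1' g2' gI'.
have eT := key st t1 t2 t1' t2' tI tI'.
exists (invmx g' *m g); first by rewrite unitmx_mul unitmx_inv u' u.
split.
- exact: conjM u' g1 g1'.
- exact: conjM u' g2 g2'.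
- by apply: conjM u' t3 _; rewrite eT.
- exact: conjL u' gI gI'.
- by move: gJ gJ' => /= -> ->; rewrite !mulmxA mulmxK.
Qed.
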